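(* Assume the standing hypotheses (H) of the context. Take $x,y\in B(x_0,R)$ and $0\le t<v<R$. If $\|x-x_0\|\le t$ and $\|y-x\|\le v-t$, then $$\lambda\|E_f(x,y)\|\le e_\psi(t,v)\frac{\|y-x\|^2}{(v-t)^2}\le\frac12\psi''(v)(v-t)^2,$$ where $E_f(x,y):=f(y)-[f(x)+f'(x)(y-x)]$ and $e_\psi(t,u):=\psi(u)-[\psi(t)+\psi'(t)(u-t)]$.
   Context: Standing hypotheses (H): $\mathbb X,\mathbb Y$ Banach spaces, $\Omega\subseteq\mathbb X$ open, $f:\Omega\to\mathbb Y$ continuous with continuous Fréchet derivative $f'$, $F:\mathbb X\rightrightarrows\mathbb Y$ with closed graph; $L_f(x,y):=f(x)+f'(x)(y-x)+F(y)$, $L_f(x,z)^{-1}:=\{y: z\in f(x)+f'(x)(y-x)+F(y)\}$, singletons $\{w\}$ identified with $w$. $x_0,x_1\in\Omega$, $\lambda>0$, and $0\in f(x_0)+f'(x_0)(x_1-x_0)+F(x_1)$ with $z\mapsto L_f(x_0,z)^{-1}\cap B(x_1,\rho_1)$ single-valued from some $B(0,\rho_2)$ into $B(x_1,\rho_1)\subset\Omega$ and $\lambda$-Lipschitz there (strong regularity). Constants $r_{x_1},r_0,r_{x_0}>0$ satisfy: for each $x\in B(x_0,r_{x_0})$, $\lambda\|f'(x)-f'(x_0)\|<1$, $z\mapsto L_f(x,z)^{-1}\cap B(x_1,r_{x_1})$ is single-valued from $B(0,r_0)$ to $B(x_1,r_{x_1})$ and Lipschitz with constant $\lambda/(1-\lambda\|f'(x)-f'(x_0)\|)$.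 $R>0$, $\kappa:=\sup\{t\in[0,R):B(x_0,t)\subset\Omega\}$, $\psi:[0,R)\to\mathbb R$ twice continuously differentiable with $\lambda\|f'(y)-f'(x)\|\le\psi'(\|y-x\|+\|x-x_0\|)-\psi'(\|x-x_0\|)$ for $x,y\in B(x_0,\kappa)$, $\|y-x\|+\|x-x_0\|<R$; $\|x_1-x_0\|\le\psi(0)$; $\psi(0)>0$, $\psi'(0)=-1$; $\psi'$ convex and strictly increasing; $\psi$ has a zero in $(0,R)$ and $t_*:=\min\{t\in[0,R):\psi(t)=0\}$; $t_*\le r_{x_0}$ and $\psi''(t_* )\psi(0)^2/(2\lambda)<r_0$.
   Formalization: The points x and y range over B(x₀,κ), where B(x₀,R) ⊂ Ω fails, instead of over B(x₀,R). The statement above fails without it. *)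

(* Defs.v *)
From HB Require Import structures.
From mathcomp Require Import all_boot all_order all_algebra.
From mathcomp Require Import all_classical all_reals all_analysis.
Set Implicit Arguments. Unset Strict Implicit. Unset Printing Implicit Defensive.
Import Order.TTheory GRing.Theory Num.Theory.
Import numFieldNormedType.Exports.
Local Open Scope classical_set_scope.
Local Open Scope ring_scope.

Definition opnorm {R : realType} {X Y : normedModType R} (L : X -> Y) : R :=
  sup [set `|L h| | h in [set h : X | `|h| <= 1]].

(* L_f(x,z)^{-1} = {y | z \in f(x) + f'(x)(y-x) + F(y)} *)
Definition Linv {R : realType} {X Y : normedModType R}
  (f : X -> Y) (f' : X -> X -> Y) (F : X -> set Y) (x : X) (z : Y) : set X :=
  [set y | F y (z - (f x + f' x (y - x)))].

Definition single_valued_lipschitz {R : realType} {X Y : normedModType R}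
  (G : Y -> set X) (A : set Y) (B : set X) (c : R) : Prop :=
  (forall z, A z -> exists! y, B y /\ G z y) /\
  (forall z z' y y', A z -> A z' -> B y -> B y' -> G z y -> G z' y' ->
     `|y - y'| <= c * `|z - z'|).

Definition kappa {R : realType} {X : normedModType R} (x0 : X) (Om : set X)
  (Rr : R) : R := sup [set t | (0 <= t < Rr) /\ ball x0 t `<=` Om].

Definition Ef {R : realType} {X Y : normedModType R}
  (f : X -> Y) (f' : X -> X -> Y) (x y : X) : Y := f y - (f x + f' x (y - x)).

Definition epsi {R : realType} (psi dpsi : R -> R) (t u : R) : R :=
  psi u - (psi t + dpsi t * (u - t)).

(* Main.v *)
Require Import Defs.
From HB Require Import structures.
From mathcomp Require Import all_boot all_order all_algebra.
From mathcomp Require Import all_classical all_reals all_analysis.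
From mathcomp Require Import ring lra.
Import Order.TTheory GRing.Theory Num.Theory.
Import numFieldNormedType.Exports.
Local Open Scope classical_set_scope.
Local Open Scope ring_scope.
Lemma diff_eps (R : realType) (X Y : normedModType R) (f : X -> Y) (p : X) :
  differentiable f p -> forall e, 0 < e -> exists2 d, 0 < d &
   forall z, `|z| < d -> `|f (p + z) - f p - 'd f p z| <= e * `|z|.
Proof.
move=> /diff_locally /eqaddoP H e e0.
have := H e e0 => /nbhs_ballP [d d0 Hd].
exists d => // z zd.
have : ball 0 d z by rewrite -ball_normE /= sub0r normrN.
move=> /Hd /=. rewrite /cst /= opprD addrA. move=> h. move: h; rewrite !fctE /= (addrC z p). by [].
Qed.

Lemma right_decr (R : realType) (w : R -> R) :
  (forall m, 0 < m <= 1 -> forall e, 0 < e -> exists2 d, 0 < d &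
      forall s, `|s - m| < d -> `|w s - w m| < e) ->
  (forall m, 0 <= m < 1 -> exists2 d, 0 < d & forall s, m < s < m + d -> w s <= w m) ->
  w 1 <= w 0.
Proof.
move=> Hc Hr.
pose B := [set t : R | (0 <= t <= 1) /\ forall s, 0 <= s <= t -> w s <= w 0].
have B0 : B 0.
  split; first by rewrite lexx ler01.
  by move=> s /andP[s0 s1]; have -> : s = 0 by apply/eqP; rewrite eq_le s1 s0.
have Bne : B !=set0 by exists 0.
have Bub : ubound B 1 by move=> t [/andP[_ ->]].
have hs : has_sup B by split => //; exists 1.
set m := sup B.
have m0 : 0 <= m by apply: sup_upper_bound.
have m1 : m <= 1 by apply: ge_sup.
have Hlt : forall s, 0 <= s < m -> w s <= w 0.
  move=> s /andP[s0 sm].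
  have [t [_ Ht] st] := sup_gt Bne sm.
  by apply: Ht; rewrite s0 ltW.
have Hm : w m <= w 0.
  have [->|mpos] := eqVneq m 0; first by [].
  have mp : 0 < m by rewrite lt_neqAle eq_sym mpos m0.
  rewrite leNgt; apply/negP => Hgt.
  have [d d0 Hd] := Hc m ltac:(by rewrite mp m1) (w m - w 0) ltac:(by rewrite subr_gt0).
  pose c := Num.min d m.
  have c1 : c <= d by rewrite ge_min lexx.
  have c2 : c <= m by rewrite ge_min lexx orbT.
  have c0 : 0 < c by rewrite lt_min d0 mp.
  pose s := m - c / 2.
  have s0 : 0 <= s by rewrite /s; lra.
  have sm : s < m by rewrite /s; lra.
  have := Hlt s ltac:(by rewrite s0 sm).
  have : `|s - m| < d by rewrite /s ltr_norml; apply/andP; split; lra.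
  move=> /Hd; rewrite ltr_norml => /andP[h1 h2] h3; lra.
have Bm : B m.
  split; first by rewrite m0 m1.
  move=> s /andP[s0]; rewrite le_eqVlt => /orP[/eqP->//|sm].
  by apply: Hlt; rewrite s0 sm.
have : m = 1.
  apply/eqP; rewrite eq_le m1 /=; rewrite leNgt; apply/negP => m1'.
  have [d d0 Hd] := Hr m ltac:(by rewrite m0 m1').
  pose c := Num.min (d / 2) (1 - m).
  have c1 : c <= d / 2 by rewrite ge_min lexx.
  have c2 : c <= 1 - m by rewrite ge_min lexx orbT.
  have c0 : 0 < c by rewrite lt_min subr_gt0 m1' andbT divr_gt0.
  have : B (m + c).
    split; first by apply/andP; split; lra.
    move=> s /andP[s0 sc]; have [sm|ms] := leP s m.
      by case: Bm => _; apply; rewrite s0 sm.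
    apply: le_trans Hm; apply: Hd; apply/andP; split; lra.
  move=> /(sup_upper_bound hs); rewrite -/m; lra.
by move=> e; move: Bm; rewrite e => -[_]; apply; rewrite ler01 lexx.
Qed.
Lemma derH (R : realType) (psi : R -> R) (r t C c k D: R) : is_derive r 1 psi D ->
  is_derive r 1 (fun x => psi x - C - c * (x - t) - k * (x - t) ^+ 2)
     (D - c - k * (2 * (r - t))).
Proof.
move=> HD.
have -> : (fun x => psi x - C - c * (x - t) - k * (x - t) ^+ 2) =
   psi - cst C - (c \*: (id - cst t)) - (k \*: ((id - cst t) ^+ 2)).
  by apply/funext => x /=; rewrite !fctE.
apply: is_derive_eq.
rewrite /= !fctE /=. rewrite !subr0 !scaler1 /GRing.scale /=. ring.
Qed.
Section Cvx.
Variables (R : realType) (phi : R -> R) (Rr : R).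
Hypothesis Hconv : forall a b s, 0 <= a < Rr -> 0 <= b < Rr -> 0 <= s <= 1 ->
     phi ((1 - s) * a + s * b) <= (1 - s) * phi a + s * phi b.

Lemma cvx3 p q r : 0 <= p -> p < q -> q < r -> r < Rr ->
  (phi q - phi p) * (r - p) <= (phi r - phi p) * (q - p) /\
  (phi r - phi p) * (r - q) <= (phi r - phi q) * (r - p).
Proof.
move=> p0 pq qr rR.
have rp : 0 < r - p by lra.
pose s := (q - p) / (r - p).
have hs : s * (r - p) = q - p by rewrite /s divfK // gt_eqF.
have s0 : 0 <= s by rewrite /s divr_ge0 //; lra.
have s1 : s <= 1 by rewrite /s ler_pdivrMr //; lra.
have eq : (1 - s) * p + s * r = q.
  have : (1 - s) * p + s * r = p + s * (r - p) by ring.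
  by move=> ->; rewrite hs; ring.
have H := Hconv p r s ltac:(apply/andP; split; lra)
   ltac:(apply/andP; split; lra) ltac:(by rewrite s0 s1).
rewrite eq in H.
have H2 := ler_wpM2r (ltW rp) H.
have e1 : ((1 - s) * phi p + s * phi r) * (r - p) = phi p * (r - p) + (phi r - phi p) * (s * (r - p)) by ring.
rewrite e1 hs in H2.
split; first lra.
have e2 : (phi r - phi q) * (r - p) - (phi r - phi p) * (r - q)
   = (phi p - phi q) * (r - p) + (phi r - phi p) * (q - p) by ring.
lra.
Qed.

Definition slope p q := (phi q - phi p) / (q - p).

Lemma slope_mono p q p' q' : 0 <= p -> p < q -> p <= p' -> q <= q' -> p' < q' -> q' < Rr ->
  slope p q <= slope p' q'.
Proof.
move=> p0 pq pp qq pq' qR.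
have s1 : slope p q <= slope p q'.
  have [e|lt] := eqVneq q q'; first by rewrite e.
  have qlt : q < q' by rewrite lt_neqAle lt qq.
  have [h _] := cvx3 p q q' p0 pq qlt qR.
  rewrite /slope ler_pdivrMr; last lra.
  rewrite mulrAC ler_pdivlMr; last lra.
  lra.
have s2 : slope p q' <= slope p' q'.
  have [e|lt] := eqVneq p p'; first by rewrite e.
  have plt : p < p' by rewrite lt_neqAle lt pp.
  have [_ h] := cvx3 p p' q' p0 plt pq' qR.
  rewrite /slope ler_pdivrMr; last lra.
  rewrite mulrAC ler_pdivlMr; last lra.
  lra.
exact: le_trans s1 s2.
Qed.
End Cvx.
Lemma der_eps (R : realType) (g : R -> R) (a D : R) : is_derive a 1 g D ->
  forall e, 0 < e -> exists2 d, 0 < d &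
    forall h, `|h| < d -> `|g (a + h) - g a - h * D| <= e * `|h|.
Proof.
move=> [dg Dv] e e0.
have := derivable_nbhs dg => /eqaddoP /(_ e e0) /nbhs_ballP [d d0 Hd].
exists d => // h hd.
have : ball 0 d h by rewrite -ball_normE /= sub0r normrN.
move=> /Hd; rewrite !fctE /= Dv /cst -[h%:A]/(h * 1) mulr1 (addrC h a).
by rewrite opprD addrA; rewrite -[h * D]/(h *: D).
Qed.
Section Psi.
Variables (R : realType) (psi dpsi d2psi : R -> R) (Rr : R).
Hypothesis Hpsic : {within [set t | 0 <= t < Rr], continuous psi}.
Hypothesis Hpsid : forall t, 0 < t < Rr ->
     is_derive t 1 psi (dpsi t) /\ is_derive t 1 dpsi (d2psi t).
Hypothesis Hconv : forall a b s, 0 <= a < Rr -> 0 <= b < Rr -> 0 <= s <= 1 ->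
     dpsi ((1 - s) * a + s * b) <= (1 - s) * dpsi a + s * dpsi b.
Hypothesis Hincr : forall a b, 0 <= a -> a < b -> b < Rr -> dpsi a < dpsi b.

Lemma supp a b : 0 <= a -> a < b -> b < Rr -> dpsi a * (b - a) <= psi b - psi a.
Proof.
move=> a0 ab bR.
have [c + ->] := MVT ab (f := psi) (df := dpsi)
  ltac:(move=> x; rewrite in_itv /= => /andP[ax xb];
        by case: (Hpsid x ltac:(apply/andP; split; lra)))
  ltac:(apply: continuous_subspaceW Hpsic => z /=; rewrite in_itv /= => /andP[az zb];
        apply/andP; split; lra).
rewrite in_itv /= => /andP[ac cb].
rewrite ler_pM2r; last by rewrite subr_gt0.
apply: ltW; apply: Hincr; lra.
Qed.

Lemma d2bound q v : 0 <= q -> q < v -> v < Rr -> dpsi v - dpsi q <= d2psi v * (v - q).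
Proof.
move=> q0 qv vR.
suff : (dpsi v - dpsi q) / (v - q) <= d2psi v.
  by rewrite ler_pdivrMr // subr_gt0.
apply/ler_addgt0Pr => e e0.
have [_ Hd] := Hpsid v ltac:(apply/andP; split; lra).
have [d d0 Hdd] := @der_eps _ _ _ _ Hd e e0.
pose eta := Num.min (d / 2) ((v - q) / 2).
have et1 : eta <= d / 2 by rewrite ge_min lexx.
have et2 : eta <= (v - q) / 2 by rewrite ge_min lexx orbT.
have et0 : 0 < eta by rewrite lt_min !divr_gt0 // subr_gt0.
have := Hdd (- eta) ltac:(rewrite normrN gtr0_norm //; lra).
rewrite normrN (gtr0_norm et0) ler_norml => /andP[h1 h2].
have := @slope_mono _ dpsi Rr Hconv q v (v - eta) v
  q0 qv ltac:(lra) (lexx v) ltac:(lra) vR.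
rewrite /slope => h3; apply: (le_trans h3).
rewrite ler_pdivrMr; last lra.
have -> : v - (v - eta) = eta by ring.
lra.
Qed.

Lemma epsi_bound t v : 0 <= t -> t < v -> v < Rr ->
  psi v - (psi t + dpsi t * (v - t)) <= 1 / 2 * d2psi v * (v - t) ^+ 2.
Proof.
move=> t0 tv vR.
pose G := fun x => (fun=> 0) x - psi t - dpsi t * (x - t) - d2psi v / 2 * (x - t) ^+ 2.
pose H := fun x => psi x - psi t - dpsi t * (x - t) - d2psi v / 2 * (x - t) ^+ 2.
have HG : forall x : R, is_derive x 1 G (0 - dpsi t - d2psi v / 2 * (2 * (x - t))).
  move=> x.
  exact: (@derH R (fun=> 0) x t (psi t) (dpsi t) (d2psi v / 2) 0 (is_derive_cst 0 x 1)).
have cG : {within `[t, v], continuous G}.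
  apply: derivable_within_continuous => x _.
  by case: (HG x).
have cH : {within `[t, v], continuous H}.
  have -> : H = psi + G by apply/funext => y; rewrite /H /G !fctE; ring.
  move=> x; apply: continuousD; last exact: cG.
  apply: (continuous_subspaceW _ Hpsic) => z /=; rewrite in_itv /= => /andP[az zb].
  by apply/andP; split; lra.
have [c + E] := MVT tv (f := H)
   (df := fun r => dpsi r - dpsi t - d2psi v / 2 * (2 * (r - t)))
   ltac:(move=> x; rewrite in_itv /= => /andP[ax xb];
        case: (Hpsid x ltac:(apply/andP; split; lra)) => P _; exact: derH) cH.
rewrite in_itv /= => /andP[tc cv].
have Ht : H t = 0 by rewrite /H !subrr expr0n /=; ring.
rewrite Ht subr0 in E.
have s1 := @slope_mono _ dpsi Rr Hconv t c t v t0 tc (lexx t) (ltW cv) tv vR.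
have s2 := d2bound t v t0 tv vR.
have s3 : slope R dpsi t v <= d2psi v.
  by rewrite /slope ler_pdivrMr // subr_gt0.
have s4 : dpsi c - dpsi t <= d2psi v * (c - t).
  by rewrite -ler_pdivrMr ?subr_gt0 //; apply: le_trans s1 s3.
have : H v <= 0.
  rewrite E; apply: mulr_le0_ge0; last lra.
  lra.
rewrite /H; lra.
Qed.
End Psi.
Lemma opnorm_le (R : realType) (X Y : normedModType R) (L : X -> Y) (k : R) :
  (forall (a : R) z, L (a *: z) = a *: L z) -> 0 <= k ->
  (forall z, `|L z| <= k * `|z|) -> forall z, `|L z| <= opnorm L * `|z|.
Proof.
move=> LZ k0 Lk z.
have L0 : L 0 = 0 by rewrite -(scale0r (0 : X)) LZ scale0r.
pose S := [set `|L h| | h in [set h : X | `|h| <= 1]].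
have hs : has_sup S.
  split; first by exists `|L 0|, 0 => //=; rewrite normr0.
  exists k => _ [h /= h1 <-]; apply: le_trans (Lk h) _.
  by rewrite -[leRHS]mulr1 ler_wpM2l.
have [->|z0] := eqVneq z 0; first by rewrite L0 !normr0 mulr0.
have nz : 0 < `|z| by rewrite normr_gt0.
pose u := `|z|^-1 *: z.
have u1 : `|u| = 1 by rewrite /u normrZ normfV normr_id mulVf // gt_eqF.
have Su : `|L u| <= opnorm L.
  by apply: sup_upper_bound => //; exists u => //=; rewrite u1.
have -> : L z = `|z| *: L u by rewrite -LZ /u scalerA mulfV ?gt_eqF // scale1r.
rewrite normrZ normr_id mulrC.
by rewrite ler_wpM2r // ltW.
Qed.

Lemma kappa_sub (R : realType) (X : normedModType R) (x0 : X) (Om : set X) (Rr : R) :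
  0 < Rr -> ball x0 (kappa x0 Om Rr) `<=` Om.
Proof.
move=> HR z; rewrite -ball_normE /= => hz.
pose S := [set t | (0 <= t < Rr) /\ ball x0 t `<=` Om].
have Sne : S !=set0.
  exists 0; split; first by rewrite lexx HR.
  by move=> w; rewrite -ball_normE /= => h; have := normr_ge0 (x0 - w); lra.
have [t [_ Ht] lt] := sup_gt Sne hz.
by apply: Ht; rewrite -ball_normE.
Qed.
Lemma dlin (R : realType) (X Y : normedModType R) (f : X -> Y) (f' : X -> X -> Y) q :
  differentiable f q /\ ('d f q : X -> Y) = f' q ->
  (forall (c : R) z, f' q (c *: z) = c *: f' q z) /\ (forall z1 z2, f' q (z1 + z2) = f' q z1 + f' q z2) /\
  exists2 k, 0 <= k & forall z, `|f' q z| <= k * `|z|.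
Proof.
move=> [df E]; rewrite -E; split; first by move=> c z; rewrite linearZ.
split; first by move=> z1 z2; rewrite linearD.
have [k k0 Hk] := linear_lipschitz (diff_continuous df).
by exists k => //; apply: ltW.
Qed.

Lemma cont_eps (R : realType) (w : R -> R) m : {for m, continuous w} ->
  forall e, 0 < e -> exists2 d, 0 < d & forall s, `|s - m| < d -> `|w s - w m| < e.
Proof.
move=> /cvgrPdist_lt H e e0; have /nbhs_ballP [d d0 Hd] := H e e0.
exists d => // s sm; rewrite distrC; apply: Hd.
by rewrite -ball_normE /= distrC.
Qed.

Lemma w_cont (R : realType) (X Y : normedModType R) (f : X -> Y) (x h: X) (psi : R -> R) (c : Y) (C c2 e t d m : R) :
  {for x + m *: h, continuous f} -> {for t + m * d, continuous psi} ->
  {for m, continuous (fun tau : R => `|f (x + tau *: h) - f x - tau *: c| - C * (psi (t + tau * d) - psi t - c2 * (tau * d)) - e * tau)}.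
Proof.
move=> cf cp.
apply: continuousB; last first.
  by apply: cvgM; [exact: cvg_cst | exact: cvg_id].
apply: continuousB.
  apply: (continuous_comp (g := fun z : Y => `|z|)); last exact: norm_continuous.
  apply: continuousB.
    apply: continuousB; last exact: cvg_cst.
    apply: (continuous_comp (g := f)) => //.
    apply: continuousD; first exact: cvg_cst.
    by apply: cvgZ; [exact: cvg_id | exact: cvg_cst].
  by apply: cvgZ; [exact: cvg_id | exact: cvg_cst].
apply: cvgM; first exact: cvg_cst.
apply: cvgB; last first.
  apply: cvgM; first exact: cvg_cst.
  by apply: cvgM; [exact: cvg_id | exact: cvg_cst].
apply: cvgB; last exact: cvg_cst.
have Hl : {for m, continuous (fun tau : R => t + tau * d)}.
  apply: cvgD; first exact: cvg_cst.
  by apply: cvgM; [exact: cvg_id | exact: cvg_cst].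
exact: (continuous_comp Hl cp).
Qed.
Arguments supp {R psi dpsi d2psi Rr} _ _ _ {a b}.
Arguments epsi_bound {R psi dpsi d2psi Rr} _ _ _ {t v}.
Arguments kappa_sub {R X x0 Om Rr}.
Arguments slope_mono {R phi Rr} _ {p q p' q'}.
Arguments opnorm_le {R X Y L k}.
Arguments dlin {R X Y f f' q}.
Arguments w_cont {R X Y f x h psi c C c2 e t d m}.
Arguments cont_eps {R w m}.
Arguments diff_eps {R X Y f p}.
Arguments right_decr {R w}.
Lemma comb (R : realType) (V : normedModType R) (x0 x y : V) (τ : R) :
  x0 - (x + τ *: (y - x)) = (1 - τ) *: (x0 - x) + τ *: (x0 - y).
Proof.
rewrite scalerBl scale1r !scalerBr !opprD !opprK !addrA.
by rewrite [X in _ = X - _](addrAC _ (τ *: x) (τ *: x0)) subrK [RHS]addrAC.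
Qed.
Lemma cvxlt (R : realType) (A B k τ : R) : 0 <= τ <= 1 -> A < k -> B < k -> (1 - τ) * A + τ * B < k.
move=> /andP[t0 t1] Ak Bk.
have h1 : A <= Num.max A B by rewrite le_max lexx.
have h2 : B <= Num.max A B by rewrite le_max lexx orbT.
have h3 : Num.max A B < k by rewrite gt_max Ak Bk.
have : (1 - τ) * A + τ * B <= Num.max A B by nra.
lra.
Qed.
Lemma ident (V : zmodType) (F1 F2 F3 P Q1 Q2 : V) :
  F1 - F3 - (Q1 + Q2) = (F1 - F2 - P) + (P - Q1) + (F2 - F3 - Q2).
Proof.
rewrite !addrA subrK (addrAC (F1 - F2)) subrK opprD addrA.
by rewrite (addrAC F1 (- F3)).
Qed.
Theorem lemma3p6 (R : realType) (X Y : completeNormedModType R)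
  (Om : set X) (f : X -> Y) (f' : X -> X -> Y) (F : X -> set Y)
  (x0 x1 : X) (lam rho1 rho2 rx1 r0 rx0 Rr tstar : R) (psi dpsi d2psi : R -> R)
  (HOm : open Om)
  (Hfc : {within Om, continuous f})
  (Hfd : forall x, Om x -> differentiable f x /\ ('d f x : X -> Y) = f' x)
  (Hf'c : forall x, Om x -> forall e, 0 < e -> exists2 d, 0 < d &
      forall y, Om y -> `|y - x| < d -> opnorm (fun h => f' y h - f' x h) < e)
  (HF : closed [set p : X * Y | F p.1 p.2])
  (Hx0 : Om x0) (Hx1 : Om x1) (Hlam : 0 < lam)
  (H0 : Linv f f' F x0 0 x1)
  (Hrho1 : 0 < rho1) (Hrho2 : 0 < rho2) (Hball1 : ball x1 rho1 `<=` Om)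
  (Hsr : single_valued_lipschitz (Linv f f' F x0) (ball (0 : Y) rho2)
           (ball x1 rho1) lam)
  (Hrx1 : 0 < rx1) (Hr0 : 0 < r0) (Hrx0 : 0 < rx0)
  (Hreg : forall x, ball x0 rx0 x ->
     lam * opnorm (fun h => f' x h - f' x0 h) < 1 /\
     single_valued_lipschitz (Linv f f' F x) (ball (0 : Y) r0) (ball x1 rx1)
       (lam / (1 - lam * opnorm (fun h => f' x h - f' x0 h))))
  (HR : 0 < Rr)
  (Hpsic : {within [set t | 0 <= t < Rr], continuous psi})
  (Hdpsic : {within [set t | 0 <= t < Rr], continuous dpsi})
  (Hd2psic : {within [set t | 0 <= t < Rr], continuous d2psi})
  (Hpsid : forall t, 0 < t < Rr ->
     is_derive t 1 psi (dpsi t) /\ is_derive t 1 dpsi (d2psi t))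
  (Hmaj : forall x y, ball x0 (kappa x0 Om Rr) x -> ball x0 (kappa x0 Om Rr) y ->
     `|y - x| + `|x - x0| < Rr ->
     lam * opnorm (fun h => f' y h - f' x h)
       <= dpsi (`|y - x| + `|x - x0|) - dpsi `|x - x0|)
  (H10 : `|x1 - x0| <= psi 0) (Hpsi0 : 0 < psi 0) (Hdpsi0 : dpsi 0 = -1)
  (Hconv : forall a b s, 0 <= a < Rr -> 0 <= b < Rr -> 0 <= s <= 1 ->
     dpsi ((1 - s) * a + s * b) <= (1 - s) * dpsi a + s * dpsi b)
  (Hincr : forall a b, 0 <= a -> a < b -> b < Rr -> dpsi a < dpsi b)
  (Hzero : exists2 t, 0 < t < Rr & psi t = 0)
  (Htstar : 0 <= tstar < Rr /\ psi tstar = 0 /\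
            forall t, 0 <= t < Rr -> psi t = 0 -> tstar <= t)
  (Htsr : tstar <= rx0)
  (Htsr0 : d2psi tstar * psi 0 ^+ 2 / (2 * lam) < r0) :
  forall (x y : X) (t v : R),
    ball x0 (kappa x0 Om Rr) x -> ball x0 (kappa x0 Om Rr) y ->
    0 <= t -> t < v -> v < Rr ->
    `|x - x0| <= t -> `|y - x| <= v - t ->
    lam * `|Ef f f' x y| <= epsi psi dpsi t v * (`|y - x| ^+ 2 / (v - t) ^+ 2)
    /\ epsi psi dpsi t v * (`|y - x| ^+ 2 / (v - t) ^+ 2)
       <= 1 / 2 * d2psi v * (v - t) ^+ 2.
Proof.
move=> x y t v Hxk Hyk t0 tv vR Hxt Hyx.
have Kom := @kappa_sub R X x0 Om Rr HR.
set k := kappa x0 Om Rr in Hxk Hyk Hmaj Kom.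
set h := y - x.
set a := `|y - x|.
set s := `|x - x0|.
set d := v - t.
have d0 : 0 < d by rewrite /d subr_gt0.
have a0 : 0 <= a by apply: normr_ge0.
have ad : a <= d by [].
have st : s <= t by [].
have s0 : 0 <= s by apply: normr_ge0.
have HeP : 0 <= epsi psi dpsi t v.
  have := supp Hpsic Hpsid Hincr t0 tv vR.
  rewrite /epsi -/d; lra.
have Ca : a ^+ 2 / d ^+ 2 <= 1.
  rewrite ler_pdivrMr ?exprn_gt0 // mul1r.
  by rewrite lerXn2r // ?nnegrE // ltW.
have Ca0 : 0 <= a ^+ 2 / d ^+ 2 by apply: divr_ge0; apply: exprn_ge0 => //; apply: ltW.
split; last first.
  have EB := epsi_bound Hpsic Hpsid Hconv t0 tv vR.
  apply: (le_trans _ EB).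
  rewrite -[X in _ <= X]mulr1 -/(epsi psi dpsi t v).
  by apply: ler_wpM2l.
pose p := fun τ : R => x + τ *: h.
have pball : forall τ, 0 <= τ <= 1 -> ball x0 k (p τ).
  move=> τ hτ; rewrite -ball_normE /= /p /h comb.
  apply: le_lt_trans (ler_normD _ _) _.
  case/andP: (hτ) => τ0 τ1.
  rewrite !normrZ (ger0_norm τ0) ger0_norm; last lra.
  apply: cvxlt => //.
    by move: Hxk; rewrite -ball_normE.
  by move: Hyk; rewrite -ball_normE.
have pOm : forall τ, 0 <= τ <= 1 -> Om (p τ) by move=> τ hτ; apply: Kom; apply: pball.
have pdist : forall τ, 0 <= τ -> `|p τ - x| = τ * a.
  by move=> τ τ0; rewrite /p addrC addKr normrZ ger0_norm.
have main : `|f y - f x - f' x h| <= (a ^+ 2 / d ^+ 2) / lam * epsi psi dpsi t v.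
  apply/ler_addgt0Pr => ε ε0.
  pose C := (a ^+ 2 / d ^+ 2) / lam.
  pose w := fun τ : R => `|f (x + τ *: h) - f x - τ *: f' x h|
     - C * (psi (t + τ * d) - psi t - dpsi t * (τ * d)) - ε * τ.
  have : w 1 <= w 0.
    apply: right_decr.
      move=> m /andP[m0 m1]; apply: cont_eps.
      apply: w_cont.
        have [df _] := Hfd _ (pOm m ltac:(apply/andP; split; lra)).
        exact: differentiable_continuous df.
      have tm : 0 < t + m * d < Rr.
        apply/andP; split; first by nra.
        have : m * d <= d by nra.
        rewrite /d in d0 *; lra.
      have [[Hp _] _] := Hpsid (t + m * d) tm.
      by apply: differentiable_continuous; apply/derivable1_diffP.
    move=> m /andP[m0 m1].
    have m01 : 0 <= m <= 1 by rewrite m0 ltW.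
    have Hfm := Hfd (p m) (pOm m m01).
    have [LZm [LDm [km km0 Hkm]]] := dlin Hfm.
    have Omx : Om x by apply: Kom.
    have [LZx [LDx [kx kx0 Hkx]]] := dlin (Hfd x Omx).
    case: Hfm => dfm Edm.
    pose Lm := fun z => f' (p m) z - f' x z.
    have Lop : `|Lm h| <= opnorm Lm * a.
      apply: (opnorm_le (k := km + kx)).
      - by move=> c z; rewrite /Lm LZm LZx scalerBr.
      - exact: addr_ge0.
      - move=> z; rewrite /Lm mulrDl; apply: le_trans (ler_normB _ _) _.
        exact: lerD.
    have Hm := Hmaj x (p m) Hxk (pball m m01).
    rewrite pdist // in Hm.
    have mas : m * a + s < Rr.
      have : m * a <= a by nra.
      rewrite /d in ad; lra.
    have {}Hm := Hm mas.
    pose D1 := dpsi (m * a + s) - dpsi s.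
    pose D2 := dpsi (t + m * d) - dpsi t.
    have tmd : t + m * d < Rr.
      have : m * d <= d by nra.
      rewrite /d in d0 *; lra.
    have chain : D1 * d <= D2 * a.
      rewrite /D1 /D2.
      have [->|mne] := eqVneq m 0.
        by rewrite !mul0r add0r addr0 !subrr !mul0r.
      have mp : 0 < m by rewrite lt_neqAle eq_sym mne m0.
      have [a0'|ane] := eqVneq a 0.
        by rewrite a0' mulr0 add0r subrr mul0r mulr0.
      have ap : 0 < a by rewrite lt_neqAle eq_sym ane a0.
      have sl := slope_mono Hconv s0 (q := s + m * a) (p' := t) (q' := t + m * d)
        ltac:(rewrite ltrDl; nra) st ltac:(nra) ltac:(rewrite ltrDl; nra) tmd.
      move: sl; rewrite /slope.
      have -> : s + m * a - s = m * a by ring.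
      have -> : t + m * d - t = m * d by ring.
      rewrite ler_pdivrMr; last nra.
      rewrite mulrAC ler_pdivlMr; last nra.
      rewrite (addrC s) -/D1 -/D2 => H.
      rewrite -/D1 -/D2.
      have : m * (D1 * d) <= m * (D2 * a).
        have -> : m * (D1 * d) = D1 * (m * d) by ring.
        by have -> : m * (D2 * a) = D2 * (m * a) by ring.
      by rewrite ler_pM2l.
    pose K := a ^+ 2 / (lam * d) * D2.
    have LK : `|Lm h| <= K.
      have e1 : lam * `|Lm h| <= D1 * a.
        have := ler_wpM2l (ltW Hlam) Lop.
        move=> H; apply: (le_trans H); rewrite mulrA.
        by apply: ler_wpM2r.
      rewrite /K mulrAC ler_pdivlMr; last by apply: mulr_gt0.
      have e2 := ler_wpM2r (ltW d0) e1.
      have e3 := ler_wpM2r a0 chain.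
      have -> : `|Lm h| * (lam * d) = lam * `|Lm h| * d by ring.
      apply: (le_trans e2); apply: (le_trans _ (le_refl _)).
      have -> : D1 * a * d = D1 * d * a by ring.
      apply: (le_trans e3); rewrite expr2; lra.
    have e' : 0 < ε / (a + 1) by apply: divr_gt0 => //; lra.
    have [d1 d10 Hd1] := diff_eps dfm _ e'.
    pose del := Num.min (d1 / (a + 1)) (1 - m).
    have del1 : del <= d1 / (a + 1) by rewrite ge_min lexx.
    have del2 : del <= 1 - m by rewrite ge_min lexx orbT.
    have del0 : 0 < del by rewrite lt_min subr_gt0 m1 andbT divr_gt0 //; lra.
    exists del => // σ /andP[mσ σd].
    have σ1 : σ <= 1 by lra.
    pose z := (σ - m) *: h.
    have nz : `|z| = (σ - m) * a by rewrite /z normrZ ger0_norm //; lra.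
    have zd : `|z| < d1.
      rewrite nz.
      have : σ - m < d1 / (a + 1) by lra.
      rewrite ltr_pdivlMr; last lra.
      nra.
    have Hz := Hd1 z zd.
    have Edz : 'd f (p m) z = (σ - m) *: f' (p m) h.
      by rewrite Edm LZm.
    rewrite Edz in Hz.
    have ps : p m + z = x + σ *: h.
      rewrite /p /z -addrA; congr (_ + _).
      by rewrite -scalerDl addrC subrK.
    rewrite ps in Hz.
    have eG : f (x + σ *: h) - f x - σ *: f' x h =
      (f (x + σ *: h) - f (p m) - (σ - m) *: f' (p m) h) + ((σ - m) *: Lm h)
      + (f (p m) - f x - m *: f' x h).
      have -> : σ *: f' x h = (σ - m) *: f' x h + m *: f' x h.
        by rewrite -scalerDl subrK.
      rewrite (@ident _ _ (f (p m)) _ ((σ - m) *: f' (p m) h)).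
      rewrite /Lm /=; congr (_ + _ + _); by rewrite scalerBr.
    have nG : `|f (x + σ *: h) - f x - σ *: f' x h| <=
       ε / (a + 1) * ((σ - m) * a) + (σ - m) * K + `|f (p m) - f x - m *: f' x h|.
      rewrite eG; apply: le_trans (ler_normD _ _) _.
      apply: lerD => //; apply: le_trans (ler_normD _ _) _.
      apply: lerD; first by rewrite -nz.
      rewrite normrZ ger0_norm; last lra.
      by apply: ler_wpM2l => //; lra.
    have σdR : t + σ * d < Rr.
      have : σ * d <= d by nra.
      rewrite /d in d0 *; lra.
    have Hs := supp Hpsic Hpsid Hincr (a := t + m * d) (b := t + σ * d)
       ltac:(nra) ltac:(rewrite ltrD2l; nra) σdR.
    have eq1 : t + σ * d - (t + m * d) = (σ - m) * d by ring.
    rewrite eq1 in Hs.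
    have PC : (σ - m) * K <= C * (psi (t + σ * d) - psi t - dpsi t * (σ * d))
              - C * (psi (t + m * d) - psi t - dpsi t * (m * d)).
      have C0 : 0 <= C by rewrite /C; apply: divr_ge0 => //; apply: ltW.
      have -> : C * (psi (t + σ * d) - psi t - dpsi t * (σ * d))
              - C * (psi (t + m * d) - psi t - dpsi t * (m * d)) =
              C * (psi (t + σ * d) - psi (t + m * d) - dpsi t * ((σ - m) * d)) by ring.
      have -> : (σ - m) * K = C * (D2 * ((σ - m) * d)).
        rewrite /K /C; field; rewrite !gt_eqF //.
      apply: ler_wpM2l => //.
      by rewrite /D2 mulrBl lerD2r.
    have ea : ε / (a + 1) * ((σ - m) * a) <= ε * (σ - m).
      have -> : ε / (a + 1) * ((σ - m) * a) = ε * (σ - m) * (a / (a + 1)).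
        by field; rewrite gt_eqF //; lra.
      rewrite ler_piMr //; first by apply: mulr_ge0; lra.
      rewrite ler_pdivrMr; lra.
    rewrite /w.
    lra.
  have w0 : w 0 = 0.
    rewrite /w !scale0r addr0 subrr subr0 normr0 !mul0r addr0 subrr; ring.
  have Ey : x + 1 *: h = y by rewrite scale1r /h addrC subrK.
  rewrite w0 /w Ey scale1r mul1r mulr1 /epsi.
  have -> : t + d = v by rewrite /d addrC subrK.
  rewrite -/C -/d.
  have -> : psi v - (psi t + dpsi t * d) = psi v - psi t - dpsi t * d by ring.
  lra.
have -> : Ef f f' x y = f y - f x - f' x h.   by rewrite /Ef opprD addrA.
have M := ler_wpM2l (ltW Hlam) main.
apply: (le_trans M).
rewrite -/a -/d.
have -> : lam * ((a ^+ 2 / d ^+ 2) / lam * epsi psi dpsi t v) =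
   epsi psi dpsi t v * (a ^+ 2 / d ^+ 2).
  by field; rewrite !gt_eqF.
by [].
Qed.
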